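(* Let $A$ be a finite abelian group. A subgroup inclusion $X\subseteq A$ is a cellular cover of $A$ if and only if $X$ is the $k$-torsion subgroup $\{x\in A: kx=0\}$ of $A$ for some positive integer $k$. Moreover every cellular cover of $A$ is equivalent to such an inclusion, so $\mathrm{Cov}(A)$ is in bijection with the set of subgroups of $A$ of the form $\{x\in A:kx=0\}$, $k\ge1$.
   Context: A cellular cover of $A$ is a homomorphism $c:X\to A$ such that $\mathrm{Hom}(X,X)\to\mathrm{Hom}(X,A)$, $f\mapsto cf$, is bijective; two cellular covers $c:X\to A$, $d:Y\to A$ are equivalent if $dh=c$ for some isomorphism $h:X\to Y$, and $\mathrm{Cov}(A)$ is the set of equivalence classes. (For finitely generated nilpotent groups such covers are injective, so they are equivalent to subgroup inclusions.) *)

(* Defs.v *)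
From HB Require Import structures.
From mathcomp Require Import all_boot all_fingroup.
Set Implicit Arguments. Unset Strict Implicit. Unset Printing Implicit Defensive.
Local Open Scope group_scope.

Definition is_hom (X Y : groupType) (f : X -> Y) : Prop :=
  forall x y : X, f (x * y) = f x * f y.

(* c : X -> A is a cellular cover: c is a homomorphism and
   Hom(X,X) -> Hom(X,A), f |-> c o f, is bijective (homomorphisms being
   compared as functions, i.e. pointwise). *)
Definition cellular_cover (X A : groupType) (c : X -> A) : Prop :=
  [/\ is_hom c,
      (forall f g : X -> X, is_hom f -> is_hom g ->
          (forall x, c (f x) = c (g x)) -> forall x, f x = g x)
    & (forall h : X -> A, is_hom h ->
          exists2 f : X -> X, is_hom f & forall x, h x = c (f x))].

Definition cover_equiv (X Y A : groupType) (c : X -> A) (d : Y -> A) : Prop :=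
  exists h : X -> Y, [/\ is_hom h, bijective h & forall x, d (h x) = c x].

(* The k-torsion subgroup {x in A | k x = 0} (written multiplicatively). *)
Definition torsion (aT : finGroupType) (k : nat) : {set aT} :=
  [set x : aT | x ^+ k == 1].

(* Main.v *)
Require Import Defs.
From HB Require Import structures.
From mathcomp Require Import all_boot all_fingroup all_solvable.
From Stdlib Require Import ClassicalEpsilon.
Set Implicit Arguments. Unset Strict Implicit. Unset Printing Implicit Defensive.
Local Open Scope group_scope.

Section Gen.
Variables (X Y : groupType) (f : X -> Y).
Hypothesis hf : is_hom f.
Lemma hom1 : f 1 = 1.
Proof. by apply: (@mulgI _ (f 1)); rewrite -hf !mulg1. Qed.
Lemma homV x : f x^-1 = (f x)^-1.
Proof. by apply: (@mulgI _ (f x)); rewrite -hf !mulgV hom1. Qed.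
Lemma homX x n : f (x ^+ n) = f x ^+ n.
Proof.
elim: n => [|n IH]; first by rewrite !expg0 hom1.
by rewrite !expgS hf IH.
Qed.
End Gen.

Lemma expg_modn (Y : groupType) (b : Y) o m : b ^+ o = 1 -> b ^+ (m %% o) = b ^+ m.
Proof.
by move=> bo; rewrite {2}(divn_eq m o) expgnDr mulnC expgnA bo expg1n mul1g.
Qed.

Section Fin.
Variable aT : finGroupType.

Definition dl (x z : aT) : nat := index z (mkseq (fun i => x ^+ i) #[x]).

Lemma dlK x z : z \in <[x]> -> x ^+ dl x z = z.
Proof.
case/cyclePmin=> i lti ->.
have mem : x ^+ i \in mkseq (fun i => x ^+ i) #[x].
  by apply/mapP; exists i => //; rewrite mem_iota.
have lt : index (x ^+ i) (mkseq (fun i => x ^+ i) #[x]) < #[x].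
  by rewrite -{2}(size_mkseq (fun i => x ^+ i) #[x]) index_mem.
by have := nth_index 1 mem; rewrite nth_mkseq.
Qed.

Lemma split_lemma (G : {group aT}) : abelian G ->
  exists x, [/\ x \in G, #[x] = exponent G &
    exists p : aT -> aT, [/\ {in G &, {morph p : a b / a * b}},
       {in G, forall a, p a \in <[x]>} & p x = x]].
Proof.
move=> abG.
have [x Gx ox] := exponent_witness (abelian_nil abG).
exists x; split => //.
have /splitsP [K /complP [ti def]] := abelian_splits Gx (esym ox) abG.
have sKG : K \subset G by rewrite -def mulG_subr.
have sXG : <[x]> \subset G by rewrite cycle_subG.
exists (divgr <[x]> K); split.
- apply: divgrM; first by apply/complP.
  exact: subset_trans sKG (subset_trans abG (centS sXG)).
- by move=> a Ga; apply: mem_divgr; rewrite def.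
- by apply: divgr_id; apply: cycle_id.
Qed.

Lemma build_hom (G : {group aT}) (x : aT) (p : aT -> aT) (Y : groupType) (b : Y) :
  {in G &, {morph p : a c / a * c}} -> {in G, forall a, p a \in <[x]>} ->
  b ^+ #[x] = 1 ->
  {in G &, {morph (fun a => b ^+ dl x (p a)) : a c / a * c}}.
Proof.
move=> pM pX bo a c Ga Gc /=.
rewrite -expgnDr -(expg_modn _ bo) -[in RHS](expg_modn _ bo); congr (_ ^+ _).
apply/eqP; rewrite -eq_expg_mod_order expgnDr !dlK ?pX ?groupM // pM // .
Qed.

Lemma build_hom_x (x : aT) (p : aT -> aT) (Y : groupType) (b : Y) :
  p x = x -> b ^+ #[x] = 1 -> b ^+ dl x (p x) = b.
Proof.
move=> px bo; rewrite px -(expg_modn _ bo) -{2}(expg1 b) -(expg_modn 1 bo).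
congr (_ ^+ _); apply/eqP; rewrite -eq_expg_mod_order expg1 dlK //; exact: cycle_id.
Qed.

Lemma core (G : {group aT}) : abelian G ->
  (forall h : aT -> aT, {in G &, {morph h : x y / x * y}} -> {in G, forall y, h y \in G}) ->
  G :=: torsion aT (exponent G).
Proof.
move=> abG hyp; apply/setP => a; rewrite inE; apply/idP/idP.
  by move=> Ga; rewrite expg_exponent.
move/eqP=> ae.
have [x [Gx ox [p [pM pX px]]]] := split_lemma abG.
have bo : a ^+ #[x] = 1 by rewrite ox.
have := hyp _ (build_hom pM pX bo) x Gx.
by rewrite /= build_hom_x.
Qed.
End Fin.
Definition pb (P : Prop) : bool := if excluded_middle_informative P then true else false.
Lemma pbP P : reflect P (pb P).
Proof. by rewrite /pb; case: excluded_middle_informative => h; constructor. Qed.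

Section Part2.
Variables (aT : finGroupType) (X : groupType) (c : X -> aT).
Hypothesis Aab : abelian [set: aT].
Hypothesis hc : cellular_cover c.

Let chom : is_hom c. Proof. by case: hc. Qed.
Let cuniq := let: And3 _ u _ := hc in u.
Let csurj := let: And3 _ _ s := hc in s.

Lemma acomm (a b : aT) : a * b = b * a.
Proof. by have /centsP := Aab; apply; rewrite inE. Qed.

Lemma ker_central k : c k = 1 -> forall y, k * y = y * k.
Proof.
move=> ck y.
have hf : is_hom (fun z : X => z ^ k) by move=> u v; rewrite conjMg.
have hid : is_hom (fun z : X => z) by [].
have hyy : y ^ k = y.
  apply: (cuniq hf hid) => z; rewrite conjgE !chom (homV chom) ck invg1 mul1g mulg1 //.
by rewrite -(mulVKg k (y * k)) -conjgE hyy.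
Qed.

Lemma hom_to_ker_trivial (g : X -> X) : is_hom g -> (forall y, c (g y) = 1) ->
  forall y, g y = 1.
Proof.
move=> hg cg y.
have hf : is_hom (fun z => z * g z).
  move=> u v; rewrite hg !mulgA; congr (_ * _); rewrite -!mulgA; congr (_ * _).
  by rewrite (ker_central (cg u)).
have hid : is_hom (fun z : X => z) by [].
have e : y * g y = y by apply: (cuniq hf hid) => z; rewrite chom cg mulg1.
by rewrite -(mulKg y (g y)) e mulVg.
Qed.

Lemma c_comm_trivial x y : c [~ x, y] = 1.
Proof.
rewrite commgEl conjgE !chom !(homV chom) (acomm (c x) (c y)) mulKg mulVg //.
Qed.

Lemma X_comm (x y : X) : x * y = y * x.
Proof.
have hg : is_hom (fun z => [~ z, y]).
  move=> x1 x2; apply: (@mulgI _ (y * (x1 * x2))).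
  have e1 : x1 * x2 * y = y * x1 * x2 * ([~ x1, y] * [~ x2, y]).
    rewrite -mulgA (commgC x2 y) !mulgA (commgC x1 y) -(mulgA _ [~ x1, y] x2).
    by rewrite (ker_central (c_comm_trivial x1 y) x2) !mulgA.
  by rewrite -(commgC (x1 * x2) y) e1 !mulgA.
have := hom_to_ker_trivial hg (fun z => c_comm_trivial z y) x.
by move/eqP/commgP.
Qed.

Definition Iset := [set a : aT | pb (exists y, c y = a)].
Lemma Iset_group : group_set Iset.
Proof.
apply/group_setP; split.
  by rewrite inE; apply/pbP; exists 1; rewrite (hom1 chom).
move=> a b; rewrite !inE => /pbP [y1 <-] /pbP [y2 <-]; apply/pbP.
by exists (y1 * y2); rewrite chom.
Qed.
Definition IG := Group Iset_group.

Lemma memI y : c y \in IG.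
Proof. by rewrite inE; apply/pbP; exists y. Qed.

Lemma X_exp (y : X) : y ^+ exponent IG = 1.
Proof.
have hg : is_hom (fun z : X => z ^+ exponent IG).
  by move=> u v; rewrite expgMn //; exact: X_comm.
apply: (hom_to_ker_trivial hg) => z.
by rewrite (homX chom) expg_exponent // memI.
Qed.

Lemma ker_trivial (k : X) : c k = 1 -> k = 1.
Proof.
move=> ck.
have abI : abelian IG by apply: abelianS Aab; apply: subsetT.
have [x0 [Ix0 ox [p [pM pX px]]]] := split_lemma abI.
have bo : k ^+ #[x0] = 1 by rewrite ox X_exp.
have bh := build_hom pM pX bo.
have hg : is_hom (fun y => k ^+ dl x0 (p (c y))).
  by move=> u v; rewrite chom bh // memI.
have cg : forall y, c (k ^+ dl x0 (p (c y))) = 1 by move=> y; rewrite (homX chom) ck expg1n.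
have [y0 ey0] : exists y0, c y0 = x0 by move: Ix0; rewrite inE => /pbP.
have := hom_to_ker_trivial hg cg y0.
by rewrite ey0 build_hom_x.
Qed.

Lemma c_inj : injective c.
Proof.
move=> a b e; apply: divg1_eq; apply: ker_trivial.
by rewrite chom (homV chom) e mulgV.
Qed.
End Part2.

Lemma part2 (aT : finGroupType) (Aab : abelian [set: aT]) (X : groupType) (c : X -> aT) :
  cellular_cover c ->
  exists H : {group aT},
    (exists2 k : nat, 0 < k & (H :=: torsion aT k)) /\ cover_equiv c (@sgval aT H).
Proof.
move=> hc; have [chom cuniq csurj] := hc.
exists (IG hc); split.
  exists (exponent (IG hc)); first exact: exponent_gt0. apply: core.
    by apply: abelianS Aab; apply: subsetT.
  move=> h hM y; rewrite inE => /pbP [y0 <-].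
  have hh : is_hom (fun z => h (c z)) by move=> u v; rewrite chom hM // (memI hc).
  by have [f _ ->] := csurj _ hh; apply: (memI hc).
have imgex : forall u : subg_of (IG hc), exists y, c y == sgval u.
  by move=> u; have := subgP u; rewrite inE => /pbP [y ey]; exists y; apply/eqP.
exists (fun y => subg (IG hc) (c y)); split.
- move=> u v; apply: subg_inj; rewrite /= !subgK ?chom ?(memI hc) //.
  by rewrite groupM // (memI hc).
- exists (fun u => xchoose (imgex u)).
    move=> y; apply: (c_inj Aab hc).
    by rewrite (eqP (xchooseP (imgex _))) subgK // (memI hc).
  move=> u; apply: subg_inj; rewrite subgK ?(memI hc) //.
  exact: (eqP (xchooseP (imgex u))).
- by move=> y; rewrite subgK // (memI hc).
Qed.

Lemma hom_sub (aT : finGroupType) (H : {group aT}) (h : aT -> aT) :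
  {in H &, {morph h : x y / x * y}} -> is_hom (fun u : subg_of H => h (sgval u)).
Proof. by move=> hM u v; rewrite /= -hM ?subgP. Qed.

Theorem proposition4p5 (aT : finGroupType) (Aab : abelian [set: aT]) :
  (forall H : {group aT},
      cellular_cover (@sgval aT H) <->
      exists2 k : nat, 0 < k & (H :=: torsion aT k))
  /\ (forall (X : groupType) (c : X -> aT), cellular_cover c ->
      exists H : {group aT},
        (exists2 k : nat, 0 < k & (H :=: torsion aT k)) /\
        cover_equiv c (@sgval aT H))
  /\ (forall H K : {group aT},
      cover_equiv (@sgval aT H) (@sgval aT K) -> H :=: K).
Proof.
split; last split.
- move=> H; split.
    case=> _ _ hs; exists (exponent H); first exact: exponent_gt0. apply: core.
      by apply: abelianS Aab; apply: subsetT.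
    move=> h hM y Hy.
    have [f _ ef] := hs _ (hom_sub hM).
    by have := ef (subg H y); rewrite subgK // => ->; apply: subgP.
  case=> k k0 eH; split.
  + by move=> u v.
  + by move=> f g _ _ e x; apply: subg_inj; apply: e.
  + move=> h hh.
    have inH : forall u, h u \in H.
      move=> u; rewrite eH inE -(homX hh) .
      have -> : u ^+ k = 1.
        have sh : is_hom (@sgval aT H) by [].
        apply: subg_inj; rewrite (homX sh).
        by apply/eqP; have := subgP u; rewrite eH inE.
      by rewrite (hom1 hh).
    exists (fun u => subg H (h u)).
      by move=> u v; apply: subg_inj; rewrite /= !subgK ?hh ?groupM ?inH.
    by move=> u; rewrite subgK.
- exact: part2.
- move=> H K [h [hh [g hg gh] e]]; apply/eqP; rewrite eqEsubset; apply/andP; split.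
    apply/subsetP => y Hy; have := subgP (h (subg H y)); by rewrite e subgK.
  apply/subsetP => z Kz; have := subgP (g (subg K z)); by rewrite -e gh subgK.
Qed.
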